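(* Let $L$ be a totally ordered normal incline and let $A$ be an $n\times n$ completely positive matrix over $L$. Then $\mathrm{CP\text{-}rank}(A)\le\max\{n,[n^2/4]\}$. Further, for $n\ge 4$, $A$ has an $[n^2/4]$-support $3$ rank $1$ CP-representation, i.e. there exist $m\le[n^2/4]$ column vectors $b_1,\dots,b_m\in L^n$, each having at most three entries different from $\mathbf{0}$, such that $A=\bigoplus_{j=1}^m b_jb_j^T$.
   Context: An incline is a nonempty set $L$ with binary operations $\oplus,\otimes$ such that $(L,\oplus)$ is a semilattice ($\oplus$ associative, commutative, idempotent), $(L,\otimes)$ is a semigroup, $x\otimes(y\oplus z)=(x\otimes y)\oplus(x\otimes z)$ and $x\oplus(x\otimes y)=x$ for all $x,y,z$. The order is $x\le y\iff x\oplus y=y$; $L$ is totally ordered if this order is total, and commutative if $\otimes$ is commutative. An r-ideal is a nonempty $J\subseteq L$ closed under $\oplus$ and under multiplication by arbitrary elements of $L$; a lattice ideal is a nonempty $J\subseteq L$ closed under $\oplus$ and downward closed. A commutative incline $L$ is normal if it has an additive identity $\mathbf{0}$ and a multiplicative identity $\mathbf{1}$ and: every singly generated r-ideal is a lattice ideal (LI-property); for each $x\in L$ there is a unique $c$ with $c\otimes c=x$ (unique square root property); $x\otimes y\le(x\otimes x)\oplus(y\otimes y)$ for all $x,y$ (AG-property). Matrix product: $(BC)_{ij}=\bigoplus_k b_{ik}\otimes c_{kj}$; matrix sum $\oplus$ is entrywise; $B^T$ is the transpose. $A$ is completely positive if $A=BB^T$ for some $n\times k$ matrix $B$ over $L$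 all of whose entries are of the form $c\otimes c$. The CP-rank of a completely positive $A$ is the smallest $k$ such that $A=BB^T$ with $B$ an $n\times k$ matrix over $L$. $[x]$ is the greatest integer not exceeding $x$. *)

(* Defs.v *)
From mathcomp Require Import all_boot.
Set Implicit Arguments. Unset Strict Implicit. Unset Printing Implicit Defensive.

Section Incline.
Variables (T : Type) (add mul : T -> T -> T).

Definition incline_le (x y : T) : Prop := add x y = y.

Definition is_incline : Prop :=
  (forall x y z, add x (add y z) = add (add x y) z) /\
  (forall x y, add x y = add y x) /\
  (forall x, add x x = x) /\
  (forall x y z, mul x (mul y z) = mul (mul x y) z) /\
  (forall x y z, mul x (add y z) = add (mul x y) (mul x z)) /\
  (forall x y, add x (mul x y) = x).

Definition totally_ordered : Prop := forall x y, incline_le x y \/ incline_le y x.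

Definition commutative_mul : Prop := forall x y, mul x y = mul y x.

Definition r_ideal (J : T -> Prop) : Prop :=
  (exists x, J x) /\
  (forall x y, J x -> J y -> J (add x y)) /\
  (forall x r, J x -> J (mul r x) /\ J (mul x r)).

Definition lattice_ideal (J : T -> Prop) : Prop :=
  (exists x, J x) /\
  (forall x y, J x -> J y -> J (add x y)) /\
  (forall x y, J y -> incline_le x y -> J x).

Definition gen_r_ideal (a : T) (x : T) : Prop :=
  forall J, r_ideal J -> J a -> J x.

Definition is_normal_incline (zero one : T) : Prop :=
  is_incline /\ commutative_mul /\
  (forall x, add zero x = x) /\
  (forall x, mul one x = x /\ mul x one = x) /\
  (* LI-property *)
  (forall a, lattice_ideal (gen_r_ideal a)) /\
  (forall x, exists c, mul c c = x /\ forall c', mul c' c' = x -> c' = c) /\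
  (* AG-property *)
  (forall x y, incline_le (mul x y) (add (mul x x) (mul y y))).

(* matrices are functions 'I_m -> 'I_n -> T; B B^T for B : n x k *)
Definition mul_tr (zero : T) (n k : nat) (B : 'I_n -> 'I_k -> T) : 'I_n -> 'I_n -> T :=
  fun i j => \big[add/zero]_(l < k) mul (B i l) (B j l).

Definition completely_positive (zero : T) (n : nat) (A : 'I_n -> 'I_n -> T) : Prop :=
  exists k (B : 'I_n -> 'I_k -> T),
    (forall i l, exists c, B i l = mul c c) /\
    (forall i j, A i j = mul_tr zero B i j).

Definition is_cp_rank (zero : T) (n : nat) (A : 'I_n -> 'I_n -> T) (r : nat) : Prop :=
  (exists B : 'I_n -> 'I_r -> T, forall i j, A i j = mul_tr zero B i j) /\
  (forall k, k < r -> ~ exists B : 'I_n -> 'I_k -> T,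
       forall i j, A i j = mul_tr zero B i j).

End Incline.

(* Main.v *)
Require Import Defs.
From mathcomp Require Import all_boot zify.
From Stdlib Require Import ClassicalEpsilon.
Set Implicit Arguments. Unset Strict Implicit. Unset Printing Implicit Defensive.

Lemma arith m a : 2 <= m -> a <= (m - 2) ^ 2 %/ 4 -> (a + (m - 2)).+1 <= m ^ 2 %/ 4.
Proof.
case: m => [|[|k]] // _; rewrite !subSS subn0 => ha.
have e : k.+2 ^ 2 = k ^ 2 + (k.+1) * 4 by rewrite !expnS !expn0; lia.
rewrite e divnDMl // addnS ltnS; lia.
Qed.

Lemma arith2 n a u : n < 4 -> a <= n ^ 2 %/ 4 -> u <= 1 -> u <= n -> a + u <= maxn n (n ^ 2 %/ 4).
Proof. case: n => [|[|[|[|k]]]] //= _; lia. Qed.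

Section Incl.
Variables (T : Type) (add mul : T -> T -> T) (zero one : T).
Hypothesis hL : is_normal_incline add mul zero one.
Hypothesis htot : totally_ordered add.

Local Notation le := (incline_le add).

Lemma addA x y z : add x (add y z) = add (add x y) z.
Proof. by case: hL => [[h _] _]. Qed.
Lemma addC x y : add x y = add y x.
Proof. by case: hL => [[_ [h _]] _]. Qed.
Lemma addxx x : add x x = x.
Proof. by case: hL => [[_ [_ [h _]]] _]. Qed.
Lemma mulA x y z : mul x (mul y z) = mul (mul x y) z.
Proof. by case: hL => [[_ [_ [_ [h _]]]] _]. Qed.
Lemma mulDr x y z : mul x (add y z) = add (mul x y) (mul x z).
Proof. by case: hL => [[_ [_ [_ [_ [h _]]]]] _]. Qed.
Lemma absorb x y : add x (mul x y) = x.
Proof. by case: hL => [[_ [_ [_ [_ [_ h]]]]] _]. Qed.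
Lemma mulC x y : mul x y = mul y x.
Proof. by case: hL => [_ [h _]]. Qed.
Lemma add0 x : add zero x = x.
Proof. by case: hL => [_ [_ [h _]]]. Qed.
Lemma mul1 x : mul one x = x.
Proof. by case: hL => [_ [_ [_ [h _]]]]; case: (h x). Qed.
Lemma mulr1 x : mul x one = x.
Proof. by rewrite mulC mul1. Qed.
Lemma LI a : lattice_ideal add (gen_r_ideal add mul a).
Proof. by case: hL => [_ [_ [_ [_ [h _]]]]]. Qed.
Lemma sqrtP x : exists c, mul c c = x /\ forall c', mul c' c' = x -> c' = c.
Proof. by case: hL => [_ [_ [_ [_ [_ [h _]]]]]]. Qed.

Lemma le_refl x : le x x.
Proof. exact: addxx. Qed.
Lemma le_anti x y : le x y -> le y x -> x = y.
Proof. rewrite /incline_le => h1 h2. by rewrite -h1 addC. Qed.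
Lemma le_trans x y z : le x y -> le y z -> le x z.
Proof. rewrite /incline_le => h1 h2. by rewrite -h2 addA h1. Qed.
Lemma le0 x : le zero x.
Proof. exact: add0. Qed.
Lemma le_addl x y : le x (add x y).
Proof. by rewrite /incline_le addA addxx. Qed.
Lemma le_addr x y : le y (add x y).
Proof. by rewrite addC; apply: le_addl. Qed.
Lemma le_add x y z : le x z -> le y z -> le (add x y) z.
Proof. rewrite /incline_le => h1 h2. by rewrite -addA h2 h1. Qed.
Lemma le_mul2l z x y : le x y -> le (mul z x) (mul z y).
Proof. rewrite /incline_le => h. by rewrite -mulDr h. Qed.
Lemma le_mul2r z x y : le x y -> le (mul x z) (mul y z).
Proof. by rewrite !(mulC _ z); apply: le_mul2l. Qed.
Lemma le_mull x y : le (mul x y) x.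
Proof. by rewrite /incline_le addC absorb. Qed.
Lemma le_mulr x y : le (mul x y) y.
Proof. rewrite mulC; exact: le_mull. Qed.
Lemma le1 x : le x one.
Proof. rewrite -{1}(mul1 x). exact: le_mull. Qed.
Lemma mul0 x : mul zero x = zero.
Proof. apply: le_anti; [exact: le_mull | exact: le0]. Qed.
Lemma mulr0 x : mul x zero = zero.
Proof. by rewrite mulC mul0. Qed.

Lemma divP x y : le x y -> exists r, x = mul y r.
Proof.
move=> hxy.
have [_ [_ hdown]] := LI y.
have hy : gen_r_ideal add mul y y by [].
apply: (hdown _ _ hy hxy (fun z => exists r, z = mul y r)).
split; first by exists y, one; rewrite mulr1.
split; first by move=> a b [r1 ->] [r2 ->]; exists (add r1 r2); rewrite mulDr.
move=> a r [r1 ->]; split.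
  by exists (mul r r1); rewrite mulA (mulC r y) mulA.
by exists (mul r1 r); rewrite mulA.
by exists one; rewrite mulr1.
Qed.

Lemma sq_le x y : le (mul x x) (mul y y) -> le x y.
Proof.
move=> h. case: (htot x y) => // hyx.
have h2 : le (mul y y) (mul x x).
  apply: le_trans (le_mul2l y hyx) _; exact: le_mul2r.
have e := le_anti h h2.
have [c [_ hc]] := sqrtP (mul y y).
rewrite (hc x e) (hc y erefl); exact: le_refl.
Qed.

Lemma le_big k (F : 'I_k -> T) X : (forall j, le (F j) X) -> le (\big[add/zero]_(j < k) F j) X.
Proof.
elim: k F => [|k IH] F h; first by rewrite big_ord0; exact: le0.
rewrite big_ord_recl; apply: le_add; [exact: h | apply: IH => j; exact: h].
Qed.

Lemma le_term k (F : 'I_k -> T) j : le (F j) (\big[add/zero]_(j < k) F j).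
Proof.
elim: k F j => [|k IH] F j; first by case: j.
rewrite big_ord_recl.
case: (unliftP ord0 j) => [j' ->|->]; last exact: le_addl.
apply: le_trans (IH (fun i => F (lift ord0 i)) j') (le_addr _ _).
Qed.

Lemma big_eqX k (F : 'I_k -> T) X : (forall j, le (F j) X) -> (exists j, F j = X) ->
  \big[add/zero]_(j < k) F j = X.
Proof.
move=> h [j hj]; apply: le_anti; first exact: le_big.
rewrite -hj; exact: le_term.
Qed.

Lemma cp_facts n (A : 'I_n -> 'I_n -> T) : completely_positive add mul zero A ->
  exists (c : 'I_n -> T) (s : 'I_n -> 'I_n -> T),
    [/\ forall i j, s i j = s j i, forall i, s i i = one &
        forall i j, A i j = mul (mul (c i) (c j)) (s i j)].
Proof.
move=> [k [B [_ hB]]].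
have Asym : forall i j, A i j = A j i.
  move=> i j; rewrite !hB /mul_tr; apply: eq_bigr => l _; exact: mulC.
have [c hc] : exists c : 'I_n -> T, forall i, mul (c i) (c i) = A i i.
  exists (fun i => proj1_sig (constructive_indefinite_description _ (sqrtP (A i i)))).
  move=> i; case: (constructive_indefinite_description _ _) => /= x [hx _]; exact: hx.
have Ble : forall i l, le (B i l) (c i).
  move=> i l; apply: sq_le; rewrite hc hB /mul_tr.
  exact: (le_term (fun l => mul (B i l) (B i l)) l).
have Ale : forall i j, le (A i j) (mul (c i) (c j)).
  move=> i j; rewrite hB /mul_tr; apply: le_big => l.
  apply: le_trans (le_mul2r _ (Ble i l)) (le_mul2l _ (Ble j l)).
have [s0 hs0] : exists s0 : 'I_n -> 'I_n -> T, forall i j, A i j = mul (mul (c i) (c j)) (s0 i j).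
  exists (fun i j => proj1_sig (constructive_indefinite_description _ (divP (Ale i j)))).
  move=> i j; case: (constructive_indefinite_description _ _) => /= x hx; exact: hx.
exists c, (fun i j : 'I_n => if i == j then one else if (i < j)%N then s0 i j else s0 j i).
split.
- move=> i j /=.
case: (eqVneq i j) => [_|hij]; first by [].
  have : (i : nat) != j by [].
  rewrite neq_ltn => /orP [h|h].
    by rewrite h ltnNge (ltnW h).
  by rewrite h ltnNge (ltnW h).
- by move=> i; rewrite eqxx.
- move=> i j /=; case: (eqVneq i j) => [->|hij]; first by rewrite mulr1 hc.
  case: ifP => _; first exact: hs0.
  by rewrite Asym hs0 (mulC (c j)).
Qed.

Lemma exists_max (X : eqType) (l : seq X) (f : X -> T) : l != [::] ->
  exists2 x, x \in l & forall y, y \in l -> le (f y) (f x).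
Proof.
elim: l => [//|a l IH] _.
case: (eqVneq l [::]) => [->|hl].
  by exists a; rewrite ?inE // => y; rewrite inE => /eqP ->; apply: le_refl.
have [x hx hmax] := IH hl.
case: (htot (f a) (f x)) => h.
  exists x; first by rewrite inE hx orbT.
  by move=> y; rewrite inE => /orP [/eqP ->|/hmax //].
exists a; first by rewrite inE eqxx.
move=> y; rewrite inE => /orP [/eqP ->|/hmax hy]; first exact: le_refl.
exact: le_trans hy h.
Qed.

Lemma mulACA x y z w : mul (mul x y) (mul z w) = mul (mul x z) (mul y w).
Proof. by rewrite -!mulA (mulA y z) (mulC y z) -mulA. Qed.

Section Build.
Variables (n : nat) (c : 'I_n -> T) (s : 'I_n -> 'I_n -> T).
Hypotheses (ssym : forall i j, s i j = s j i) (s1 : forall i, s i i = one).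

Definition AA i j := mul (mul (c i) (c j)) (s i j).

Definition V (d : 'I_n * {set 'I_n}) i :=
  if i == d.1 then c i else if i \in d.2 then mul (c i) (s d.1 i) else zero.

Definition good (d : 'I_n * {set 'I_n}) :=
  #|d.2| <= 2 /\ forall j k, j \in d.2 -> k \in d.2 -> j != k -> j != d.1 -> k != d.1 ->
     le (mul (s d.1 j) (s d.1 k)) (s j k).

Definition Cov (L : seq ('I_n * {set 'I_n})) i i' :=
  exists2 d, d \in L & mul (V d i) (V d i') = AA i i'.

Lemma AAsym i j : AA i j = AA j i.
Proof. by rewrite /AA ssym (mulC (c i)). Qed.

Lemma AAii i : AA i i = mul (c i) (c i).
Proof. by rewrite /AA s1 mulr1. Qed.

Lemma V_le d : good d -> forall i i', le (mul (V d i) (V d i')) (AA i i').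
Proof.
case: d => a J [_ hv] i i'; rewrite /V /=.
case hia: (i == a); case hi'a: (i' == a).
- move/eqP: hia => ->; move/eqP: hi'a => ->; rewrite AAii; exact: le_refl.
- move/eqP: hia => ->.
  case hi': (i' \in J); last by rewrite mulr0; exact: le0.
  rewrite /AA mulA; exact: le_refl.
- move/eqP: hi'a => ->.
  case hi: (i \in J); last by rewrite mul0; exact: le0.
  rewrite AAsym /AA mulC mulA ssym; exact: le_refl.
- case hi: (i \in J); last by rewrite mul0; exact: le0.
  case hi': (i' \in J); last by rewrite mulr0; exact: le0.
  rewrite mulACA /AA; apply: le_mul2l.
  case: (eqVneq i i') => [e|hne].
    subst i'; rewrite s1; exact: le1.
  by apply: hv => //; rewrite ?hia ?hi'a.
Qed.

Lemma cov_sym (L : seq ('I_n * {set 'I_n})) i i' : Cov L i i' -> Cov L i' i.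
Proof. by case=> d hd e; exists d => //; rewrite mulC AAsym. Qed.

Lemma cov_mono (L L2 : seq ('I_n * {set 'I_n})) i i' : (forall d, d \in L -> d \in L2) -> Cov L i i' -> Cov L2 i i'.
Proof. by move=> h [d hd e]; exists d => //; apply: h. Qed.

Lemma cov_center (L : seq ('I_n * {set 'I_n})) d : d \in L -> Cov L d.1 d.1.
Proof. by move=> hd; exists d => //; rewrite /V eqxx AAii. Qed.

Lemma cov_edge (L : seq ('I_n * {set 'I_n})) d j : d \in L -> j \in d.2 -> Cov L d.1 j.
Proof.
move=> hd hj; case: (eqVneq j d.1) => [->|hne]; first exact: cov_center.
exists d => //; rewrite /V eqxx (negbTE hne) hj /AA mulA //.
Qed.


Lemma step (S : {set 'I_n}) p q a0 (L' : seq ('I_n * {set 'I_n})) (U' : {set 'I_n}) :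
  p \in S -> q \in S -> p != q ->
  (forall a b, a \in S -> b \in S -> a != b -> le (s a b) (s p q)) ->
  a0 \in S :\ p :\ q -> le (s p a0) (s q a0) ->
  (forall d, d \in L' -> good d) ->
  (forall i i', i \in S :\ p :\ q -> i' \in S :\ p :\ q -> i != i' -> Cov L' i i') ->
  (forall i, i \in S :\ p :\ q -> i \notin U' -> Cov L' i i) ->
  let L := [:: (p, [set a0; q]); (q, [set a0])] ++
           [seq (a, [set p; q]) | a <- enum (S :\ p :\ q :\ a0)] ++ L' in
  [/\ forall d, d \in L -> good d,
      size L = (size L' + #|S :\ p :\ q|).+1,
      forall i i', i \in S -> i' \in S -> i != i' -> Cov L i i' &
      forall i, i \in S -> (i \notin U' \/ i != a0) -> Cov L i i].
Proof.
move=> hp hq hpq hmax ha0 hor hgood hcov hcovd L.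
have ha0' : a0 \in S /\ a0 != p /\ a0 != q.
  by move: ha0; rewrite !inE => /and3P [-> -> ->].
case: ha0' => ha0S [ha0p ha0q].
have hd1 : (p, [set a0; q]) \in L by rewrite /L inE eqxx.
have hd2 : (q, [set a0]) \in L by rewrite /L !inE eqxx orbT.
have hda : forall a, a \in S :\ p :\ q :\ a0 -> (a, [set p; q]) \in L.
  move=> a ha; rewrite /L mem_cat; apply/orP; right; rewrite mem_cat; apply/orP; left.
  by apply: (map_f (fun a => (a, [set p; q]))); rewrite mem_enum.
have hL' : forall d, d \in L' -> d \in L.
  by move=> d hd; rewrite /L !mem_cat hd !orbT.
split.
- move=> d; rewrite /L !mem_cat => /orP [|/orP [|/hgood //]].
  + rewrite !inE => /orP [/eqP ->|/eqP ->].
    * split; first by rewrite cards2; case: (a0 != q).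
      move=> j k /=; rewrite !inE => /orP [/eqP ->|/eqP ->] /orP [/eqP ->|/eqP ->];
        rewrite ?eqxx // => _ _ _.
      -- apply: le_trans (le_mull _ _) _; rewrite (ssym a0 q); exact: hor.
      -- rewrite mulC; exact: le_trans (le_mull _ _) hor.
    * split; first by rewrite cards1.
      by move=> j k /=; rewrite !inE => /eqP -> /eqP ->; rewrite eqxx.
  + case/mapP => a; rewrite mem_enum => ha ->.
    have [haS [hap haq]] : a \in S /\ a != p /\ a != q.
      by move: ha; rewrite !inE => /and4P [_ -> -> ->].
    split; first by rewrite cards2; case: (p != q).
    move=> j k /=; rewrite !inE => /orP [/eqP ->|/eqP ->] /orP [/eqP ->|/eqP ->];
      rewrite ?eqxx // => _ _ _.
    * apply: le_trans (le_mull _ _) _; exact: hmax.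
    * apply: le_trans (le_mull _ _) _; rewrite (ssym q); exact: hmax.
- rewrite /L /= size_cat size_map -cardE.
  rewrite (cardsD1 a0 (S :\ p :\ q)) ha0 /=.
  by rewrite add1n addnS addnC.
- have cls : forall i, i \in S -> [\/ i = p, i = q, i = a0 | i \in S :\ p :\ q :\ a0].
    move=> i hi; case: (eqVneq i p) => [->|hip]; first by constructor 1.
    case: (eqVneq i q) => [->|hiq]; first by constructor 2.
    case: (eqVneq i a0) => [->|hia]; first by constructor 3.
    by constructor 4; rewrite !inE hip hiq hia hi.
  have Hpq : Cov L p q by apply: (cov_edge hd1); rewrite !inE eqxx orbT.
  have Hpa : Cov L p a0 by apply: (cov_edge hd1); rewrite !inE eqxx.
  have Hqa : Cov L q a0 by apply: (cov_edge hd2); rewrite !inE eqxx.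
  have Hap : forall a, a \in S :\ p :\ q :\ a0 -> Cov L a p.
    by move=> a ha; apply: (cov_edge (hda a ha)); rewrite !inE eqxx.
  have Haq : forall a, a \in S :\ p :\ q :\ a0 -> Cov L a q.
    by move=> a ha; apply: (cov_edge (hda a ha)); rewrite !inE eqxx orbT.
  have HS : forall i i', i \in S :\ p :\ q -> i' \in S :\ p :\ q -> i != i' -> Cov L i i'.
    by move=> i i' hi hi' hne; apply: (cov_mono hL'); apply: hcov.
  have sub : forall a, a \in S :\ p :\ q :\ a0 -> a \in S :\ p :\ q.
    by move=> a; rewrite [in X in X -> _]inE => /andP [].
  move=> i i' hi hi' hne.
  case: (cls i hi) => [ei|ei|ei|hi1]; case: (cls i' hi') => [ei'|ei'|ei'|hi1'];
    subst; rewrite ?eqxx // in hne;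
    by [ exact: cov_sym | apply: cov_sym; auto | auto | apply: HS; auto ].
- move=> i hi hU.
  case: (eqVneq i p) => [->|hip]; first exact: (cov_center hd1).
  case: (eqVneq i q) => [->|hiq]; first exact: (cov_center hd2).
  case: (eqVneq i a0) => [e|hia].
    subst i; apply: (cov_mono hL'); apply: hcovd => //.
    by case: hU => //; rewrite eqxx.
  have ha : i \in S :\ p :\ q :\ a0 by rewrite !inE hip hiq hia hi.
  exact: (cov_center (hda i ha)).
Qed.

Lemma build m : forall S : {set 'I_n}, #|S| = m -> exists L : seq ('I_n * {set 'I_n}),
  [/\ forall d, d \in L -> good d, size L <= m ^ 2 %/ 4,
      forall i i', i \in S -> i' \in S -> i != i' -> Cov L i i',
      exists U : {set 'I_n}, #|U| <= 1 /\ forall i, i \in S -> i \notin U -> Cov L i i &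
      4 <= m -> forall i, i \in S -> Cov L i i].
Proof.
elim/ltn_ind: m => m IH S hS.
case: (ltnP m 2) => hm.
  exists [::]; split => //.
  - move=> i i' hi hi' hne; exfalso.
    have : #|S| <= 1 by rewrite hS; lia.
    move/card_le1_eqP => h.
    by move: (h _ _ hi hi') hne => /= ->; rewrite eqxx.
  - by exists S; split; [rewrite hS; lia | move=> i ->].
  - move=> h4; exfalso; lia.
have [x [y [hx hy hxy]]] : exists x y, [/\ x \in S, y \in S & x != y].
  by apply/card_gt1P; rewrite hS.
pose P := [set pr : 'I_n * 'I_n | (pr.1 \in S) && (pr.2 \in S) && (pr.1 != pr.2)].
have hPne : enum P != [::].
  apply/negP => /eqP e.
  have : (x, y) \in enum P by rewrite mem_enum inE /= hx hy hxy.
  by rewrite e.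
have [[p q] hpqP hmaxP] := exists_max (fun pr => s pr.1 pr.2) hPne.
move: hpqP; rewrite mem_enum inE /= => /andP [/andP [hp hq] hpq].
have hmax : forall a b, a \in S -> b \in S -> a != b -> le (s a b) (s p q).
  move=> a b ha hb hab; apply: (hmaxP (a, b)); by rewrite mem_enum inE /= ha hb hab.
set S' := S :\ p :\ q.
have hS' : #|S'| = m - 2.
  have := cardsD1 p S; rewrite hp hS => e1.
  have := cardsD1 q (S :\ p); rewrite in_setD1 hq (eq_sym q p) hpq /= -/S' => e2.
  by rewrite e1 e2 /= addnA addnC addnK.
have eS' : S' = S :\ p :\ q by [].
clearbody S'.
have [L' [hgood hsize hcov [U' [hU' hcovd]] _]] := IH (m - 2) ltac:(lia) S' hS'.
case: (set_0Vmem S') => [S'0|[b hb]].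
  have hm2 : m = 2.
    move: hS'; rewrite S'0 cards0; lia.
  have hL'0 : size L' = 0 by apply/eqP; move: hsize; rewrite hm2 leqn0.
  have hd : (p, [set q]) \in (p, [set q]) :: L' by rewrite inE eqxx.
  have cls : forall i, i \in S -> i = p \/ i = q.
    move=> i hi; case: (eqVneq i p) => [->|hip]; first by left.
    case: (eqVneq i q) => [->|hiq]; first by right.
    have : i \in S' by rewrite eS' !inE hip hiq hi.
    by rewrite S'0 inE.
  exists ((p, [set q]) :: L'); split.
  - move=> d; rewrite inE => /orP [/eqP ->|/hgood //].
    split; first by rewrite cards1.
    by move=> j k /=; rewrite !inE => /eqP -> /eqP ->; rewrite eqxx.
  - by rewrite /= hL'0 hm2.
  - have Hpq : Cov ((p, [set q]) :: L') p q by apply: (cov_edge hd); rewrite inE.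
    move=> i i' hi hi' hne.
    case: (cls i hi) => ei; case: (cls i' hi') => ei'; subst i i';
      rewrite ?eqxx // in hne; first [exact: Hpq | exact: (cov_sym Hpq)].
  - exists [set q]; split; first by rewrite cards1.
    move=> i hi; rewrite inE; case: (cls i hi) => ->; last by rewrite eqxx.
    by move=> _; exact: (cov_center hd).
  - by rewrite hm2.
have [a0 [ha0 ha0U]] : exists a0, a0 \in S' /\ (a0 \in U' -> #|S'| <= 1).
  case: (pickP [pred a | (a \in S') && (a \notin U')]) => [a /andP [h1 h2]|hnone].
    by exists a; split => //; rewrite (negbTE h2).
  exists b; split => // _.
  apply: leq_trans hU'; apply: subset_leq_card; apply/subsetP => a ha.
  by move: (hnone a) => /=; rewrite ha /= => /negbT; rewrite negbK.
have main : forall p' q', p' \in S -> q' \in S -> p' != q' ->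
    (forall a b, a \in S -> b \in S -> a != b -> le (s a b) (s p' q')) ->
    S :\ p' :\ q' = S' -> le (s p' a0) (s q' a0) ->
    exists L : seq ('I_n * {set 'I_n}),
  [/\ forall d, d \in L -> good d, size L <= m ^ 2 %/ 4,
      forall i i', i \in S -> i' \in S -> i != i' -> Cov L i i',
      exists U : {set 'I_n}, #|U| <= 1 /\ forall i, i \in S -> i \notin U -> Cov L i i &
      4 <= m -> forall i, i \in S -> Cov L i i].
  move=> p' q' hp' hq' hpq' hmax' eS hor.
  rewrite -eS in ha0 hcov hcovd.
  have [g1 g2 g3 g4] := step hp' hq' hpq' hmax' ha0 hor hgood hcov hcovd.
  eexists; split; [exact: g1 | | exact: g3 | |].
  - by rewrite g2 eS hS'; exact: arith hm hsize.
  - exists (U' :&: [set a0]); split.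
      by apply: leq_trans (subset_leq_card (subsetIr _ _)) _; rewrite cards1.
    move=> i hi; rewrite !inE negb_and => /orP [h|h]; apply: g4 => //; [by left | by right].
  - move=> h4 i hi; apply: g4 => //.
    case: (eqVneq i a0) => [->|]; last by right.
    left; apply/negP => /ha0U; rewrite hS' => h; by have := leq_trans (leq_sub2r 2 h4) h.
case: (htot (s p a0) (s q a0)) => hor.
  exact: (main p q hp hq hpq hmax (esym eS') hor).
apply: (main q p hq hp) => //; first by rewrite eq_sym.
- by move=> a1 b1 ha1 hb1 hab1; rewrite (ssym q p); apply: hmax.
- by apply/setP => i; rewrite eS' !inE; case: (i != p); case: (i != q).
Qed.

Lemma rep (L : seq ('I_n * {set 'I_n})) : (forall d, d \in L -> good d) ->
  (forall i i', Cov L i i') -> forall i i',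
  AA i i' = \big[add/zero]_(j < size L) mul (V (tnth (in_tuple L) j) i) (V (tnth (in_tuple L) j) i').
Proof.
move=> hg hc i i'; symmetry; apply: big_eqX.
  by move=> j; apply: V_le; apply: hg; exact: mem_tnth.
case: (hc i i') => d hd e.
have [j hj] : exists j, d = tnth (in_tuple L) j by apply/tnthP.
by exists j; rewrite -hj.
Qed.

Lemma full_cover (L : seq ('I_n * {set 'I_n})) :
  (forall i i', i != i' -> Cov L i i') -> (forall i, Cov L i i) -> forall i i', Cov L i i'.
Proof. by move=> h1 h2 i i'; case: (eqVneq i i') => [<-|/h1 //]; apply: h2. Qed.

End Build.
End Incl.

Theorem mainTheorem6 (T : Type) (add mul : T -> T -> T) (zero one : T)
  (hL : is_normal_incline add mul zero one) (htot : totally_ordered add)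
  (n : nat) (A : 'I_n -> 'I_n -> T)
  (hA : completely_positive add mul zero A) :
  (forall r, is_cp_rank add mul zero A r -> r <= maxn n (n ^ 2 %/ 4)) /\
  (4 <= n ->
   exists m (b : 'I_m -> 'I_n -> T),
     m <= n ^ 2 %/ 4 /\
     (forall j, exists S : {set 'I_n}, #|S| <= 3 /\
                  forall i, i \notin S -> b j i = zero) /\
     (forall i i', A i i' = \big[add/zero]_(j < m) mul (b j i) (b j i'))).
Proof.
have [c [s [ssym s1 hAs]]] := cp_facts hL htot hA.
have hT : #|[set: 'I_n]| = n by rewrite cardsT card_ord.
have [L [hg hsz hcov [U [hU hcovd]] hfull]] := build hL htot c ssym s1 hT.
have hAA : forall i i', A i i' = AA mul c s i i' by move=> i i'; rewrite hAs.
split.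
- move=> r [_ hmin].
  have [L2 [hg2 hsz2 hcov2]] : exists L2 : seq ('I_n * {set 'I_n}),
      [/\ forall d, d \in L2 -> good add mul s d , size L2 <= maxn n (n ^ 2 %/ 4) &
          forall i i', Cov mul zero c s L2 i i'].
    case: (leqP 4 n) => h4.
      exists L; split => //; first by apply: leq_trans hsz (leq_maxr _ _).
      apply: full_cover => [i i' hne|i].
        by apply: hcov => //; rewrite inE.
      by apply: hfull => //; rewrite inE.
    exists (L ++ [seq (u, set0) | u <- enum U]); split.
    * move=> d; rewrite mem_cat => /orP [/hg //|/mapP [u _ ->]].
      split; first by rewrite cards0.
      by move=> j k /=; rewrite inE.
    * rewrite size_cat size_map -cardE; apply: arith2 => //.
      by apply: leq_trans (subset_leq_card (subsetT U)) _; rewrite hT.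
    * apply: full_cover => [i i' hne|i].
        apply: (cov_mono (L:=L)) => [d hd|]; first by rewrite mem_cat hd.
        by apply: hcov => //; rewrite inE.
      case: (boolP (i \in U)) => hi.
        have hd : (i, set0) \in L ++ [seq (u, set0) | u <- enum U].
          rewrite mem_cat; apply/orP; right.
          by apply: (map_f (fun u => (u, set0))); rewrite mem_enum.
        exact: (cov_center hL c s1 hd).
      apply: (cov_mono (L:=L)) => [d hd|]; first by rewrite mem_cat hd.
      by apply: hcovd => //; rewrite inE.
  rewrite leqNgt; apply/negP => hlt; apply: (hmin _ (leq_ltn_trans hsz2 hlt)).
  exists (fun i j => V mul zero c s (tnth (in_tuple L2) j) i) => i i'.
  by rewrite hAA /mul_tr (rep hL ssym s1 hg2 hcov2).
- move=> h4.
  have hc : forall i i', Cov mul zero c s L i i'.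
    apply: full_cover => [i i' hne|i]; [apply: hcov => //; rewrite inE | apply: hfull => //; rewrite inE].
  exists (size L), (fun j i => V mul zero c s (tnth (in_tuple L) j) i); split; first exact: hsz.
  split.
    move=> j; exists ((tnth (in_tuple L) j).1 |: (tnth (in_tuple L) j).2); split.
      have [h2 _] := hg _ (mem_tnth j (in_tuple L)).
      by rewrite cardsU1; apply: leq_trans (leq_add (leq_b1 _) h2) _.
    move=> i; rewrite !inE negb_or => /andP [h1 h2].
    by rewrite /V (negbTE h1) (negbTE h2).
  by move=> i i'; rewrite hAA (rep hL ssym s1 hg hc).
Qed.
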